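(* Consider the nearest-neighbor graph $\mathcal{G}^\mu_{x(k)}$ for a positive integer $\mu$, and algorithms in $\mathcal{A}^*_{\rm ave}$. (i) If $n\le\mu+1$, every algorithm in $\mathcal{A}^*_{\rm ave}$ achieves global finite-time consensus. (ii) If $n>\mu+1$, every algorithm in $\mathcal{A}^*_{\rm ave}$ fails to achieve finite-time consensus for Lebesgue-almost every initial value $x^0\in\mathbb{R}^n$. (iii) If $n>\mu+1$ and the sequence $\{\alpha_k\}$ is monotone (non-decreasing or non-increasing), the algorithm achieves global asymptotic consensus.
   Context: Nodes $\mathcal{V}=\{1,\dots,n\}$, $n\ge3$, states $x_i(k)\in\mathbb{R}$, discrete time. The class $\mathcal{A}^*_{\rm ave}$ consists of the updates $$x_i(k+1)=\alpha_k\min_{j\in\mathcal{N}_i(k)}x_j(k)+(1-\alpha_k)\max_{j\in\mathcal{N}_i(k)}x_j(k)$$ with node-independent parameters $\alpha_k\in(0,1)$ for all $k$; here $\mathcal{N}_i(k)=\{i\}\cup\mathcal{N}_i^-(k)\cup\mathcal{N}_i^+(k)$. Nearest-neighbor graph $\mathcal{G}^\mu_{x(k)}$: $\mathcal{N}_i^-(k)$ is a set of $\min(\mu,|\{j:x_j(k)<x_i(k)\}|)$ nodes $j$ with $x_j(k)<x_i(k)$ whose values are closest to $x_i(k)$ among such nodes (ties broken arbitrarily), and $\mathcal{N}_i^+(k)$ is defined symmetrically from $\{j: x_j(k)>x_i(k)\}$. The iteration starts at time $k_0\ge0$ with $x(k_0)=x^0$. Finite-time consensus for $x^0$: there exist $z_*$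 and an integer $T_*$ with $x_i(T_* )=z_*$ for all $i$; asymptotic consensus: there is $z_*$ with $x_i(k)\to z_*$ for all $i$; ''global'' means for all $k_0$ and all $x^0\in\mathbb{R}^n$. *)

(* Defs.v *)
From Stdlib Require Import Reals.
From mathcomp Require Import all_boot.
Set Implicit Arguments. Unset Strict Implicit. Unset Printing Implicit Defensive.

Open Scope R_scope.

Definition state (n : nat) := 'I_n -> R.

Definition ltRb (a b : R) : bool := if Rlt_dec a b then true else false.

Definition lower_ok (n mu : nat) (x : state n) (i : 'I_n) (S : {set 'I_n}) : Prop :=
  #|S| = minn mu #|[set j | ltRb (x j) (x i)]| /\
  (forall j, j \in S -> x j < x i) /\
  (forall j j', j \in S -> x j' < x i -> j' \notin S -> x j' <= x j).

Definition upper_ok (n mu : nat) (x : state n) (i : 'I_n) (S : {set 'I_n}) : Prop :=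
  #|S| = minn mu #|[set j | ltRb (x i) (x j)]| /\
  (forall j, j \in S -> x i < x j) /\
  (forall j j', j \in S -> x i < x j' -> j' \notin S -> x j <= x j').

(* A neighbor-selection (tie-breaking) policy: at time k and state x, node i
   gets (N_i^-(k), N_i^+(k)). *)
Definition policy (n : nat) := nat -> state n -> 'I_n -> {set 'I_n} * {set 'I_n}.

Definition policy_ok (n mu : nat) (sel : policy n) : Prop :=
  forall k x i, lower_ok mu x i (sel k x i).1 /\ upper_ok mu x i (sel k x i).2.

Definition nbhd (n : nat) (i : 'I_n) (p : {set 'I_n} * {set 'I_n}) : {set 'I_n} :=
  [set i] :|: p.1 :|: p.2.

Definition minN (n : nat) (x : state n) (i : 'I_n) (N : {set 'I_n}) : R :=
  \big[Rmin/x i]_(j in N) x j.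
Definition maxN (n : nat) (x : state n) (i : 'I_n) (N : {set 'I_n}) : R :=
  \big[Rmax/x i]_(j in N) x j.

Definition step (n : nat) (alpha : nat -> R) (sel : policy n) (k : nat) (x : state n)
  : state n :=
  fun i => let N := nbhd i (sel k x i) in
           alpha k * minN x i N + (1 - alpha k) * maxN x i N.

(* traj alpha sel k0 x0 m = x(k0 + m), with x(k0) = x0 *)
Fixpoint traj (n : nat) (alpha : nat -> R) (sel : policy n) (k0 : nat) (x0 : state n)
  (m : nat) : state n :=
  match m with
  | O => x0
  | S m' => step alpha sel (k0 + m') (traj alpha sel k0 x0 m')
  end.

Definition alpha_ok (alpha : nat -> R) : Prop := forall k, 0 < alpha k < 1.

Definition monotone_seq (alpha : nat -> R) : Prop :=
  (forall k, alpha k <= alpha (S k)) \/ (forall k, alpha (S k) <= alpha k).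

Definition finite_time_consensus (n : nat) (x : nat -> state n) : Prop :=
  exists (z : R) (T : nat), forall i, x T i = z.

Definition asymptotic_consensus (n : nat) (x : nat -> state n) : Prop :=
  exists z : R, forall i, Un_cv (fun m => x m i) z.

Definition box_vol (n : nat) (a b : state n) : R :=
  \big[Rmult/1]_(i < n) (b i - a i).

Definition lebesgue_null (n : nat) (P : state n -> Prop) : Prop :=
  forall eps, 0 < eps ->
  exists a b : nat -> state n,
    (forall m i, a m i <= b m i) /\
    (forall x, P x -> exists m, forall i, a m i <= x i <= b m i) /\
    (forall N, sum_f_R0 (fun m => box_vol (a m) (b m)) N <= eps).

(* Main.v *)
From HB Require Import structures.
From Stdlib Require Import Reals Lra Lia Psatz Classical ClassicalEpsilon.
From mathcomp Require Import all_boot zify.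
Require Import Defs.
Set Implicit Arguments. Unset Strict Implicit. Unset Printing Implicit Defensive.
Open Scope R_scope.

Lemma ltRbP a b : reflect (a < b) (ltRb a b).
Proof. rewrite /ltRb; case: Rlt_dec => h; by constructor. Qed.

Definition leRb (a b : R) : bool := if Rle_dec a b then true else false.
Lemma leRbP a b : reflect (a <= b) (leRb a b).
Proof. rewrite /leRb; case: Rle_dec => h; by constructor. Qed.

Lemma bigmin_spec (T : eqType) (r : seq T) (P : pred T) (F : T -> R) s :
  let v := \big[Rmin/s]_(k <- r | P k) F k in
  v <= s /\ (forall k, k \in r -> P k -> v <= F k) /\
  (v = s \/ exists k, k \in r /\ P k /\ v = F k).
Proof.
elim: r => [|a r IH] /=.
  rewrite big_nil; split; [lra|split]; [by [] | by left].
rewrite big_cons; case: IH => [h1 [h2 h3]].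
set w := \big[Rmin/s]_(j <- r | P j) F j in h1 h2 h3 *.
case Pa: (P a).
  split; first by have := Rmin_r (F a) w; lra.
  split.
    move=> k; rewrite in_cons => /orP [/eqP -> _|kr Pk]; first exact: Rmin_l.
    have := Rmin_r (F a) w; have := h2 k kr Pk; lra.
  case: (Rle_dec (F a) w) => hle.
    right; exists a; rewrite in_cons eqxx; split=>//; split=>//; by rewrite Rmin_left.
  rewrite Rmin_right; last lra.
  case: h3 => [->|[k [kr [Pk ->]]]]; first by left.
  by right; exists k; rewrite in_cons kr orbT.
split=>//; split.
  move=> k; rewrite in_cons => /orP [/eqP -> |kr Pk]; first by rewrite Pa.
  exact: h2.
case: h3 => [->|[k [kr [Pk ->]]]]; first by left.
by right; exists k; rewrite in_cons kr orbT.
Qed.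

Lemma bigmax_spec (T : eqType) (r : seq T) (P : pred T) (F : T -> R) s :
  let v := \big[Rmax/s]_(k <- r | P k) F k in
  s <= v /\ (forall k, k \in r -> P k -> F k <= v) /\
  (v = s \/ exists k, k \in r /\ P k /\ v = F k).
Proof.
elim: r => [|a r IH] /=.
  rewrite big_nil; split; [lra|split]; [by [] | by left].
rewrite big_cons; case: IH => [h1 [h2 h3]].
set w := \big[Rmax/s]_(j <- r | P j) F j in h1 h2 h3 *.
case Pa: (P a).
  split; first by have := Rmax_r (F a) w; lra.
  split.
    move=> k; rewrite in_cons => /orP [/eqP -> _|kr Pk]; first exact: Rmax_l.
    have := Rmax_r (F a) w; have := h2 k kr Pk; lra.
  case: (Rle_dec w (F a)) => hle.
    right; exists a; rewrite in_cons eqxx; split=>//; split=>//; by rewrite Rmax_left.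
  rewrite Rmax_right; last lra.
  case: h3 => [->|[k [kr [Pk ->]]]]; first by left.
  by right; exists k; rewrite in_cons kr orbT.
split=>//; split.
  move=> k; rewrite in_cons => /orP [/eqP -> |kr Pk]; first by rewrite Pa.
  exact: h2.
case: h3 => [->|[k [kr [Pk ->]]]]; first by left.
by right; exists k; rewrite in_cons kr orbT.
Qed.

Section Node.
Variables (n : nat) (x : state n).

Lemma minN_le (i : 'I_n) (N : {set 'I_n}) j : j \in N -> minN x i N <= x j.
Proof.
move=> jN; rewrite /minN; have [_ [h _]] := bigmin_spec (index_enum 'I_n) (mem N) x (x i).
exact: h (mem_index_enum _) jN.
Qed.
Lemma minN_self (i : 'I_n) (N : {set 'I_n}) : minN x i N <= x i.
Proof. by have [h _] := bigmin_spec (index_enum 'I_n) (mem N) x (x i). Qed.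
Lemma minN_att (i : 'I_n) (N : {set 'I_n}) : minN x i N = x i \/ exists j, j \in N /\ minN x i N = x j.
Proof.
have [_ [_ [h|[k [_ [kN h]]]]]] := bigmin_spec (index_enum 'I_n) (mem N) x (x i).
  by left; exact: h. by right; exists k; split=>//; exact: h.
Qed.
Lemma maxN_ge (i : 'I_n) (N : {set 'I_n}) j : j \in N -> x j <= maxN x i N.
Proof.
move=> jN; rewrite /maxN; have [_ [h _]] := bigmax_spec (index_enum 'I_n) (mem N) x (x i).
exact: h (mem_index_enum _) jN.
Qed.
Lemma maxN_self (i : 'I_n) (N : {set 'I_n}) : x i <= maxN x i N.
Proof. by have [h _] := bigmax_spec (index_enum 'I_n) (mem N) x (x i). Qed.
Lemma maxN_att (i : 'I_n) (N : {set 'I_n}) : maxN x i N = x i \/ exists j, j \in N /\ maxN x i N = x j.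
Proof.
have [_ [_ [h|[k [_ [kN h]]]]]] := bigmax_spec (index_enum 'I_n) (mem N) x (x i).
  by left; exact: h. by right; exists k; split=>//; exact: h.
Qed.
Lemma minN_ge (i : 'I_n) (N : {set 'I_n}) c : c <= x i -> (forall j, j \in N -> c <= x j) -> c <= minN x i N.
Proof. move=> h1 h2; case: (minN_att i N) => [->|[j [jN ->]]] //; exact: h2. Qed.
Lemma minN_gt (i : 'I_n) (N : {set 'I_n}) c : c < x i -> (forall j, j \in N -> c < x j) -> c < minN x i N.
Proof. move=> h1 h2; case: (minN_att i N) => [->|[j [jN ->]]] //; exact: h2. Qed.
Lemma maxN_le (i : 'I_n) (N : {set 'I_n}) c : x i <= c -> (forall j, j \in N -> x j <= c) -> maxN x i N <= c.
Proof. move=> h1 h2; case: (maxN_att i N) => [->|[j [jN ->]]] //; exact: h2. Qed.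

Lemma in_nbhd (i : 'I_n) (p : {set 'I_n} * {set 'I_n}) j : (j \in nbhd i p) = [|| j == i, j \in p.1 | j \in p.2].
Proof. by rewrite /nbhd !inE orbA. Qed.
Lemma self_nbhd (i : 'I_n) (p : {set 'I_n} * {set 'I_n}) : i \in nbhd i p.
Proof. by rewrite in_nbhd eqxx. Qed.

End Node.

Lemma sub_card_mem (T : finType) (A B : {set T}) :
  A \subset B -> (#|B| <= #|A|)%N -> forall y, y \in B -> y \in A.
Proof. move=> sAB cBA; have /eqP -> : A == B by rewrite eqEcard sAB cBA. by []. Qed.

Section Sel.
Variables (n mu : nat) (sel : policy n) (hsel : policy_ok mu sel) (k : nat) (x : state n).

Definition Lw i := (sel k x i).1.
Definition Up i := (sel k x i).2.
Definition below i := [set j | ltRb (x j) (x i)].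
Definition above i := [set j | ltRb (x i) (x j)].
Definition mN i := minN x i (nbhd i (sel k x i)).
Definition MN i := maxN x i (nbhd i (sel k x i)).

Lemma Lw_card i : #|Lw i| = minn mu #|below i|.
Proof. by case: (hsel k x i) => [[h _] _]. Qed.
Lemma Up_card i : #|Up i| = minn mu #|above i|.
Proof. by case: (hsel k x i) => [_ [h _]]. Qed.
Lemma Lw_lt i j : j \in Lw i -> x j < x i.
Proof. by case: (hsel k x i) => [[_ [h _]] _]; apply: h. Qed.
Lemma Up_gt i j : j \in Up i -> x i < x j.
Proof. by case: (hsel k x i) => [_ [_ [h _]]]; apply: h. Qed.
Lemma Lw_close i j j' : j \in Lw i -> x j' < x i -> j' \notin Lw i -> x j' <= x j.
Proof. by case: (hsel k x i) => [[_ [_ h]] _]; apply: h. Qed.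
Lemma Up_close i j j' : j \in Up i -> x i < x j' -> j' \notin Up i -> x j <= x j'.
Proof. by case: (hsel k x i) => [_ [_ [_ h]]]; apply: h. Qed.

Lemma Lw_sub i : Lw i \subset below i.
Proof. by apply/subsetP => j /Lw_lt h; rewrite inE; apply/ltRbP. Qed.
Lemma Up_sub i : Up i \subset above i.
Proof. by apply/subsetP => j /Up_gt h; rewrite inE; apply/ltRbP. Qed.

Lemma Lw_full i j : (#|below i| <= mu)%N -> x j < x i -> j \in Lw i.
Proof.
move=> hc hj; apply: (sub_card_mem (Lw_sub i)); last by rewrite inE; apply/ltRbP.
by rewrite Lw_card; move/minn_idPr: hc => ->.
Qed.
Lemma Up_full i j : (#|above i| <= mu)%N -> x i < x j -> j \in Up i.
Proof.
move=> hc hj; apply: (sub_card_mem (Up_sub i)); last by rewrite inE; apply/ltRbP.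
by rewrite Up_card; move/minn_idPr: hc => ->.
Qed.

Lemma mN_le i j : j \in nbhd i (sel k x i) -> mN i <= x j.
Proof. exact: minN_le. Qed.
Lemma MN_ge i j : j \in nbhd i (sel k x i) -> x j <= MN i.
Proof. exact: maxN_ge. Qed.
Lemma mN_self i : mN i <= x i. Proof. exact: minN_self. Qed.
Lemma MN_self i : x i <= MN i. Proof. exact: maxN_self. Qed.

Lemma MN_mono i j : x i <= x j -> MN i <= MN j.
Proof.
move=> hij; apply: Rnot_lt_le => hlt.
have hj := MN_self j.
case: (maxN_att x i (nbhd i (sel k x i))) => [h|[s [sN h]]]; rewrite -/(MN i) in h.
  rewrite h in hlt; lra.
rewrite h in hlt.
move: sN; rewrite in_nbhd => /or3P [/eqP si|sL|sU]; first by rewrite si in hlt; lra.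
  have := Lw_lt sL; lra.
have his := Up_gt sU.
case: (leqP #|above j| mu) => hc.
  have : s \in Up j by apply: Up_full => //; lra.
  move=> sUj; have : x s <= MN j by apply: MN_ge; rewrite in_nbhd sUj !orbT.
  lra.
have cUj : #|Up j| = mu by rewrite Up_card; apply/minn_idPl; apply: ltnW.
have cUi : (#|Up i| <= mu)%N by rewrite Up_card geq_minl.
have sUj : s \notin Up j.
  apply/negP => sUj; have : x s <= MN j by apply: MN_ge; rewrite in_nbhd sUj !orbT.
  lra.
have sub : s |: Up j \subset Up i.
  apply/subsetP => u; rewrite !inE => /orP [/eqP -> //|uU].
  have hu1 := Up_gt uU.
  have hu2 : x u <= MN j by apply: MN_ge; rewrite in_nbhd uU !orbT.
  apply/negPn/negP => uUi.
  have := Up_close sU (j:=s) (j':=u); rewrite /Up in uUi *; move=> /(_ ltac:(lra) uUi). lra.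
have := subset_leq_card sub; rewrite cardsU1 sUj cUj add1n => hh; move: (leq_trans hh cUi); by rewrite ltnn.
Qed.

Lemma mN_mono i j : x i <= x j -> mN i <= mN j.
Proof.
move=> hij; apply: Rnot_lt_le => hlt.
have hi := mN_self i.
case: (minN_att x j (nbhd j (sel k x j))) => [h|[s [sN h]]]; rewrite -/(mN j) in h.
  rewrite h in hlt; lra.
rewrite h in hlt.
move: sN; rewrite in_nbhd => /or3P [/eqP si|sL|sU]; first by rewrite si in hlt; lra.
  have his := Lw_lt sL.
  case: (leqP #|below i| mu) => hc.
    have : s \in Lw i by apply: Lw_full => //; lra.
    move=> sLi; have : mN i <= x s by apply: mN_le; rewrite in_nbhd sLi orbT.
    lra.
  have cLi : #|Lw i| = mu by rewrite Lw_card; apply/minn_idPl; apply: ltnW.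
  have cLj : (#|Lw j| <= mu)%N by rewrite Lw_card geq_minl.
  have sLi : s \notin Lw i.
    apply/negP => sLi; have : mN i <= x s by apply: mN_le; rewrite in_nbhd sLi orbT.
    lra.
  have sub : s |: Lw i \subset Lw j.
    apply/subsetP => u; rewrite !inE => /orP [/eqP -> //|uL].
    have hu1 := Lw_lt uL.
    have hu2 : mN i <= x u by apply: mN_le; rewrite in_nbhd uL orbT.
    apply/negPn/negP => uLj.
    have := Lw_close sL (j':=u); rewrite /Lw in uLj *; move=> /(_ ltac:(lra) uLj); lra.
  have := subset_leq_card sub; rewrite cardsU1 sLi cLi add1n => hh; move: (leq_trans hh cLj); by rewrite ltnn.
have := Up_gt sU; lra.
Qed.

End Sel.

Lemma step_eq n (alpha : nat -> R) (sel : policy n) k (x : state n) i :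
  step alpha sel k x i = alpha k * mN sel k x i + (1 - alpha k) * MN sel k x i.
Proof. by []. Qed.

Definition Jinv n mu (x : state n) (a b : 'I_n) :=
  (forall j, j != a -> x a < x j) /\ #|[set j | leRb (x j) (x b)]| = mu.+1.

Section Inv.
Variables (n mu : nat) (sel : policy n) (hsel : policy_ok mu sel) (k : nat) (x : state n).
Variables (alpha : nat -> R) (ha : 0 < alpha k < 1) (hmu : (1 <= mu)%N) (hn : (mu.+1 < n)%N).
Variables (a b : 'I_n) (hJ : Jinv mu x a b).

Let B := [set j | leRb (x j) (x b)].
Let Bc : #|B| = mu.+1. Proof. by case: hJ => _ h; exact: h. Qed.
Let amin j : j != a -> x a < x j. Proof. by case: hJ => h _; exact: h. Qed.
Let amin' j : x a <= x j.
Proof. case: (eqVneq j a) => [->|h]; [lra|have := amin h; lra]. Qed.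
Let inB j : (j \in B) = leRb (x j) (x b). Proof. by rewrite inE. Qed.

Let aB : a \in B. Proof. by rewrite inB; apply/leRbP. Qed.
Let ba : b != a.
Proof.
apply/negP => /eqP ba.
have : B \subset [set a].
  apply/subsetP => j; rewrite inB inE => /leRbP hj; apply/negPn/negP => ja.
  have := amin ja; rewrite ba in hj; lra.
move/subset_leq_card; rewrite cards1 Bc; lia.
Qed.
Let xab : x a < x b. Proof. exact: amin ba. Qed.
Let BaC : #|B :\ a| = mu. Proof. by have := cardsD1 a B; rewrite aB Bc add1n => -[]. Qed.

Let exC : exists c, x b < x c.
Proof.
apply: NNPP => h.
have : [set: 'I_n] \subset B.
  apply/subsetP => j _; rewrite inB; apply/leRbP; apply: Rnot_lt_le => hj; apply: h; by exists j.
move/subset_leq_card; rewrite cardsT card_ord Bc; lia.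
Qed.

Let UpA u : u \in Up sel k x a -> x u <= x b.
Proof.
move=> uU; apply: Rnot_lt_le => hu.
have sub : u |: (B :\ a) \subset Up sel k x a.
  apply/subsetP => o; rewrite !inE => /orP [/eqP -> //|/andP [oa /leRbP ob]].
  apply/negPn/negP => oU.
  have := Up_close hsel uU (j':=o) (amin oa) oU; lra.
have uB : u \notin B :\ a by rewrite !inE; apply/negP => /andP [_ /leRbP]; lra.
have := subset_leq_card sub; rewrite cardsU1 uB BaC (Up_card hsel); have := geq_minl mu #|above x a|.
move=> h1 h2; have := leq_trans h2 h1; by rewrite add1n ltnn.
Qed.

Let mNa : mN sel k x a = x a.
Proof.
apply: Rle_antisym; first exact: mN_self.
apply: minN_ge; first lra. move=> j _; exact: amin'.
Qed.

Let MNa : MN sel k x a <= x b.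
Proof.
apply: maxN_le; first lra.
move=> j; rewrite in_nbhd => /or3P [/eqP ->|jL|jU]; first lra.
  have := Lw_lt hsel jL; have := amin' j; lra.
exact: UpA.
Qed.

Let MNj j : j != a -> x b < MN sel k x j.
Proof.
move=> ja; case: (Rlt_le_dec (x b) (x j)) => hj; first by have := MN_self sel k x j; lra.
apply: Rnot_le_lt => hM.
have jB : j \in B :\ a by rewrite !inE ja; apply/leRbP.
have sub : Up sel k x j \subset (B :\ a) :\ j.
  apply/subsetP => u uU; have hu := Up_gt hsel uU.
  have : x u <= MN sel k x j by apply: MN_ge; rewrite in_nbhd uU !orbT.
  move=> hu2; rewrite !inE; apply/andP; split; first by apply/negP => /eqP ej; rewrite ej in hu; lra.
  apply/andP; split; last by apply/leRbP; lra.
  apply/negP => /eqP ea; rewrite ea in hu; have := amin' j; lra.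
have c1 := cardsD1 j (B :\ a); rewrite jB BaC add1n in c1.
have hlt : (#|Up sel k x j| < mu)%N.
  have := subset_leq_card sub. move: c1. set q := #|_ :\ j|. move=> c1 h. lia.
have hmin : minn mu #|above x j| = #|above x j|.
  move: hlt; rewrite (Up_card hsel); lia.
have [c hc] := exC.
have : c \in Up sel k x j.
  apply: (sub_card_mem (Up_sub hsel k x j)); first by rewrite (Up_card hsel) hmin.
  by rewrite inE; apply/ltRbP; lra.
move=> cU; have : x c <= MN sel k x j by apply: MN_ge; rewrite in_nbhd cU !orbT.
lra.
Qed.

Let mNb : mN sel k x b <= x a.
Proof.
apply: mN_le; rewrite in_nbhd; apply/or3P; apply: Or32.
apply: Lw_full => //.
have sub : below x b \subset B :\ b.
  apply/subsetP => o; rewrite !inE => /ltRbP ho; apply/andP; split; last by apply/leRbP; lra.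
  by apply/negP => /eqP e; rewrite e in ho; lra.
have := subset_leq_card sub; have := cardsD1 b B; rewrite inB.
have -> : leRb (x b) (x b) by apply/leRbP; lra.
rewrite Bc; lia.
Qed.

Let mNj j : x b < x j -> x a < mN sel k x j.
Proof.
move=> hj.
have aL : a \notin Lw sel k x j.
  apply/negP => aL.
  have sub : B \subset Lw sel k x j.
    apply/subsetP => o; rewrite inB => /leRbP ho; apply/negPn/negP => oL.
    have := Lw_close hsel aL (j':=o) ltac:(lra) oL => h.
    case: (eqVneq o a) => [e|oa]; first by rewrite e aL in oL.
    have := amin oa; lra.
  have := subset_leq_card sub; rewrite Bc (Lw_card hsel); have := geq_minl mu #|below x j|; lia.
apply: minN_gt; first lra.
move=> u; rewrite in_nbhd => /or3P [/eqP ->|uL|uU]; first lra.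
  apply: amin; apply/negP => /eqP e; rewrite e in uL; by rewrite uL in aL.
have := Up_gt hsel uU; lra.
Qed.

Lemma Jinv_step : Jinv mu (step alpha sel k x) a b.
Proof.
split.
  move=> j ja; rewrite !step_eq.
  have h1 : mN sel k x a <= mN sel k x j by rewrite mNa; apply: minN_ge => // *; exact: amin'.
  have h2 := MNj ja.
  nra.
rewrite -Bc; apply: eq_card => j; rewrite !inE.
apply/leRbP/leRbP; rewrite !step_eq => h.
  apply: Rnot_lt_le => hj.
  have h1 := mNj hj. have h2 := MN_mono hsel k (Rlt_le _ _ hj).
  nra.
have h1 := mN_mono hsel k h. have h2 := MN_mono hsel k h.
nra.
Qed.
End Inv.

Lemma exists_argmin n (x : state n) (O : {set 'I_n}) i0 : i0 \in O ->
  exists j, j \in O /\ forall o, o \in O -> x j <= x o.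
Proof.
move=> i0O; have hle := minN_le x i0 (N:=O).
case: (minN_att x i0 O) => [h|[j [jO h]]].
  exists i0; split=>// o oO; rewrite -h; exact: hle.
exists j; split=>// o oO; rewrite -h; exact: hle.
Qed.

Lemma exists_argmax n (x : state n) (O : {set 'I_n}) i0 : i0 \in O ->
  exists j, j \in O /\ forall o, o \in O -> x o <= x j.
Proof.
move=> i0O; have hle := maxN_ge x i0 (N:=O).
case: (maxN_att x i0 O) => [h|[j [jO h]]].
  exists i0; split=>// o oO; rewrite -h; exact: hle.
exists j; split=>// o oO; rewrite -h; exact: hle.
Qed.

Definition rk n (x : state n) (i : 'I_n) := #|[set j | leRb (x j) (x i)]|.

Lemma rank_exists n (x : state n) (hinj : forall i j, x i = x j -> i = j) r :
  (1 <= r <= n)%N -> exists b, rk x b = r.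
Proof.
case: n x hinj => [|n] x hinj hr; first by lia.
have rk_pos i : (0 < rk x i)%N.
  by apply/card_gt0P; exists i; rewrite inE; apply/leRbP; lra.
have rk_le i : (rk x i <= n.+1)%N by rewrite -[X in (_ <= X)%N]card_ord; exact: max_card.
pose f (i : 'I_n.+1) : 'I_n.+1 := inord (rk x i).-1.
have lt_rk i j : x i < x j -> (rk x i < rk x j)%N.
  move=> hij; apply: proper_card; apply/properP; split.
    apply/subsetP => o; rewrite !inE => /leRbP h; apply/leRbP; lra.
  exists j; rewrite !inE; first by apply/leRbP; lra.
  by apply/negP => /leRbP; lra.
have finj : injective f.
  move=> i j; rewrite /f => /(congr1 val) => /=; rewrite !inordK.
  move=> e; case: (Rtotal_order (x i) (x j)) => [h|[h|h]].
  - have := lt_rk _ _ h; have := rk_pos i; lia.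
  - exact: hinj.
  - have := lt_rk _ _ h; have := rk_pos j; lia.
  by have := rk_pos j; have := rk_le j; lia.
  by have := rk_pos i; have := rk_le i; lia.
have [g fg gf] := injF_bij finj.
exists (g (inord r.-1)).
have := gf (inord r.-1); rewrite /f => /(congr1 val) => /=.
have h1 := rk_pos (g (inord r.-1)); have h2 := rk_le (g (inord r.-1)).
rewrite !inordK; lia.
Qed.

Lemma RmultA : associative Rmult. Proof. by move=> *; rewrite Rmult_assoc. Qed.
HB.instance Definition _ := Monoid.isComLaw.Build R 1 Rmult RmultA Rmult_comm Rmult_1_l.

Fixpoint dec (f k m : nat) : nat * nat :=
  match f with
  | O => (k, m)
  | S f' => if odd m then dec f' k.+1 m./2 else (k, m./2)
  end.

Fixpoint enc (k r : nat) : nat :=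
  match k with O => r.*2 | S k' => (enc k' r).*2.+1 end.

Lemma dec_S f k m : dec f.+1 k m = if odd m then dec f k.+1 m./2 else (k, m./2).
Proof. by []. Qed.

Lemma dec_fuel f f' k m : (m < f)%N -> (m < f')%N -> dec f k m = dec f' k m.
Proof.
elim: f f' k m => [|g IH] [|g'] k m //= h1 h2.
case om: (odd m) => //; apply: IH.
  have := odd_double_half m; rewrite om; lia.
have := odd_double_half m; rewrite om; lia.
Qed.

Lemma halfS2 e : (e.*2.+1)./2 = e.
Proof. by rewrite -add1n (half_bit_double e true). Qed.

Lemma dec_enc k r j f : (enc k r < f)%N -> dec f j (enc k r) = (j + k, r)%N.
Proof.
elim: k j f => [|k IH] j [|f] //=.
  by rewrite odd_double doubleK addn0.
move=> h; rewrite /= odd_double /= uphalf_double IH; first by rewrite addSnnS.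
lia.
Qed.

Lemma sum_mono_N (u : nat -> R) N M : (forall m, 0 <= u m) -> (N <= M)%N ->
  sum_f_R0 u N <= sum_f_R0 u M.
Proof.
move=> h /subnK <-; elim: (M - N)%N => [|d IH]; first by rewrite add0n; lra.
rewrite addSn /=; have := h (d + N).+1; lra.
Qed.

Lemma sum_ge0 (u : nat -> R) N : (forall m, 0 <= u m) -> 0 <= sum_f_R0 u N.
Proof. move=> h; elim: N => [|N IH] /=; [exact: h| have := h N.+1; lra]. Qed.

Lemma sum_split2 (u : nat -> R) r :
  sum_f_R0 u r.*2.+1 = sum_f_R0 (fun m => u m.*2) r + sum_f_R0 (fun m => u m.*2.+1) r.
Proof.
elim: r => [|r IH] //=; rewrite doubleS /=; move: IH => /= IH; lra.
Qed.

Lemma sum_bound_L (u : nat -> R) (L : nat) c0 N : 0 <= c0 ->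
  (forall m, 0 <= u m) -> (forall m, (L <= m)%N -> u m = 0) -> (forall m, u m <= c0) ->
  sum_f_R0 u N <= INR L * c0.
Proof.
move=> hc h0 hz hle.
suff : sum_f_R0 u N <= INR (minn N.+1 L) * c0.
  move=> hs; apply: (Rle_trans _ _ _ hs); apply: Rmult_le_compat_r => //; apply: le_INR.
  by apply/leP; rewrite geq_minr.
elim: N => [|N IH] /=.
  case: (leqP L 0) => hL.
    by rewrite hz //; have := pos_INR (minn 1 L); nra.
  by rewrite (minn_idPl hL) /=; have := hle 0%N; lra.
case: (leqP L N.+1) => hL.
  rewrite hz // Rplus_0_r; apply: (Rle_trans _ _ _ IH); apply: Rmult_le_compat_r => //.
  by apply: le_INR; apply/leP; lia.
have -> : minn N.+2 L = (minn N.+1 L).+1 by lia.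
rewrite S_INR; have := hle N.+1; lra.
Qed.

Section Null.
Variable n : nat.

Lemma box_vol_ge0 (a b : state n) : (forall i, a i <= b i) -> 0 <= box_vol a b.
Proof.
move=> h; rewrite /box_vol; apply: (big_ind (fun v => 0 <= v)); first lra.
  by move=> *; nra.
by move=> i _; have := h i; lra.
Qed.

Lemma null_mono (P Q : state n -> Prop) :
  (forall x, P x -> Q x) -> lebesgue_null Q -> lebesgue_null P.
Proof.
move=> hPQ hQ eps he; have [a [b [h1 [h2 h3]]]] := hQ eps he.
exists a, b; split=>//; split=>// x /hPQ; exact: h2.
Qed.

Lemma box0 (i : 'I_n) : box_vol (fun _ : 'I_n => 0) (fun _ => 0) = 0.
Proof. by rewrite /box_vol (bigD1 i) //= Rminus_0_r Rmult_0_l. Qed.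

Lemma null_empty (i : 'I_n) : lebesgue_null (fun _ : state n => False).
Proof.
move=> eps he; exists (fun _ _ => 0), (fun _ _ => 0); split; first by move=> *; lra.
split=>//; move=> N; rewrite (@PartSum.sum_eq _ (fun _ => 0)); last by move=> *; exact: box0.
elim: N => [|N IH] /=; lra.
Qed.

Lemma null_union (P : nat -> state n -> Prop) :
  (forall k, lebesgue_null (P k)) -> lebesgue_null (fun x => exists k, P k x).
Proof.
move=> hP eps he.
have hk : forall k, exists ab : (nat -> state n) * (nat -> state n),
   (forall m i, ab.1 m i <= ab.2 m i) /\
   (forall x, P k x -> exists m, forall i, ab.1 m i <= x i <= ab.2 m i) /\
   (forall N, sum_f_R0 (fun m => box_vol (ab.1 m) (ab.2 m)) N <= eps / 2 ^ k.+1).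
  move=> k; have hp : 0 < eps / 2 ^ k.+1 by apply: Rdiv_lt_0_compat => //; apply: pow_lt; lra.
  have [a [b H]] := hP k _ hp; by exists (a, b).
pose AB k := proj1_sig (constructive_indefinite_description _ (hk k)).
have HAB k : _ := proj2_sig (constructive_indefinite_description _ (hk k)).
pose D m := dec m.+1 0 m.
exists (fun m => (AB (D m).1).1 (D m).2), (fun m => (AB (D m).1).2 (D m).2).
split; first by move=> m i; case: (HAB (D m).1) => h _; apply: h.
split.
  move=> x [k Pk]; case: (HAB k) => _ [hc _]; have [r hr] := hc x Pk.
  exists (enc k r); rewrite /D dec_enc //= add0n; exact: hr.
pose v k r := box_vol ((AB k).1 r) ((AB k).2 r).
have v0 k r : 0 <= v k r by apply: box_vol_ge0; case: (HAB k) => h _; apply: h.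
have vs k N : sum_f_R0 (v k) N <= eps / 2 ^ k.+1 by case: (HAB k) => _ [_ h]; apply: h.
pose W k m := v (dec m.+1 k m).1 (dec m.+1 k m).2.
have W0 k m : 0 <= W k m by apply: v0.
have Wev k r : W k r.*2 = v k r by rewrite /W /= odd_double doubleK.
have Wod k r : W k r.*2.+1 = W k.+1 r.
  rewrite /W dec_S oddS odd_double halfS2 (@dec_fuel r.*2.+1 r.+1) //; lia.
have main : forall N k, sum_f_R0 (W k) N <= eps / 2 ^ k.
  move=> N; elim/ltn_ind: N => N IH k.
  have e2 : eps / 2 ^ k.+1 + eps / 2 ^ k.+1 = eps / 2 ^ k.
    rewrite /= ; field; apply: pow_nonzero; lra.
  have hp : 0 < eps / 2 ^ k.+1 by apply: Rdiv_lt_0_compat => //; apply: pow_lt; lra.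
  case: N IH => [|N] IH.
    rewrite /= -[0%N]/(0.*2)%N Wev; have h := vs k 0%N; change (sum_f_R0 (v k) 0) with (v k 0%N) in h; lra.
  pose r := (N.+1)./2.
  have hr : (N.+1 <= r.*2.+1)%N by have := odd_double_half N.+1; rewrite /r; case: odd; lia.
  apply: (Rle_trans _ _ _ (sum_mono_N (W0 k) hr)).
  rewrite sum_split2 (@PartSum.sum_eq _ (v k)); last by move=> i _ /=; apply: Wev.
  rewrite (@PartSum.sum_eq (fun m => W k m.*2.+1) (W k.+1)); last by move=> i _; apply: Wod.
  have hrN : (r < N.+1)%N by have := odd_double_half N.+1; rewrite /r; case: odd; lia.
  have := IH r hrN k.+1; have := vs k r; rewrite -e2 /=; lra.
move=> N; have := main N 0%N; rewrite /= Rdiv_1_r => h.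
exact: h.
Qed.
End Null.

Lemma prod_le_pow (T : eqType) (r : seq T) (P : pred T) (F : T -> R) C :
  1 <= C -> (forall l, 0 <= F l <= C) ->
  0 <= \big[Rmult/1]_(l <- r | P l) F l <= C ^ size r.
Proof.
move=> hC hF; elim: r => [|a r IH]; first by rewrite big_nil /=; lra.
have : 0 <= C ^ size r by apply: pow_le; lra.
rewrite big_cons /=; have := hF a; case: (P a) => h; split; nra.
Qed.

Lemma size_index_enum_ord n : size (index_enum 'I_n) = n.
Proof. by rewrite -(filter_predT (index_enum _)) deprecated_filter_index_enum -cardE card_ord. Qed.

Lemma interval_pick (L : nat) s : (1 <= L)%N -> 0 <= s <= INR L ->
  exists c, (c < L)%N /\ INR c <= s <= INR c + 1.
Proof.
elim: L s => [|L IH] s // _ hs.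
case: (leqP L 0) => hL.
  have L0 : L = 0%N by lia. subst L.
  exists 0%N; split=>//; simpl in hs |- *; lra.
case: (Rle_lt_dec s (INR L)) => h.
  have [c [hc hc2]] := IH s hL ltac:(lra); exists c; split=>//; lia.
exists L; split=>//; move: hs; rewrite S_INR; lra.
Qed.

Lemma Rabs_bnd a K : Rabs a <= K -> -K <= a <= K.
Proof. rewrite /Rabs; case: Rcase_abs => *; lra. Qed.

Section Piece.
Variable n : nat.

Lemma null_piece (i j : 'I_n) (K : R) : i != j -> 0 < K ->
  lebesgue_null (fun x : state n => x i = x j /\ forall l, Rabs (x l) <= K).
Proof.
move=> ij hK eps he.
pose C := Rmax (2 * K) 1.
have hC1 : 1 <= C by apply: Rmax_r.
have hC2 : 2 * K <= C by apply: Rmax_l.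
have hCn : 0 < C ^ n by apply: pow_lt; lra.
have [L hL] := INR_unbounded (4 * K * K * C ^ n / eps + 1).
have hq : 0 <= 4 * K * K * C ^ n / eps.
  apply: Rmult_le_pos; last by apply: Rlt_le; apply: Rinv_0_lt_compat.
  have : 0 <= K * K by nra. nra.
have L1 : (1 <= L)%N.
  case: L hL => [|L] /= hL; last by [].
  lra.
have hLp : 0 < INR L by apply: lt_0_INR; apply/ltP.
have hL1 : 1 <= INR L by apply: (le_INR 1); apply/leP.
pose h := 2 * K / INR L.
have hh : 0 < h by apply: Rdiv_lt_0_compat; lra.
have hh2 : h <= 2 * K.
  rewrite /h; apply: (Rmult_le_reg_r (INR L)) => //; field_simplify; try lra; nra.
pose sp (l : 'I_n) := (l == i) || (l == j).
pose a (c : nat) (l : 'I_n) := if (c < L)%N then (if sp l then -K + INR c * h else -K) else 0.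
pose b (c : nat) (l : 'I_n) := if (c < L)%N then (if sp l then -K + (INR c + 1) * h else K) else 0.
exists a, b; split.
  move=> c l; rewrite /a /b; case: (c < L)%N; last lra.
  case: (sp l); first nra. lra.
split.
  move=> x [hij hb].
  have [hi1 hi2] := Rabs_bnd (hb i).
  have hs0 : 0 <= (x i + K) / h by apply: Rmult_le_pos; [lra|apply: Rlt_le; apply: Rinv_0_lt_compat].

  have hs1 : (x i + K) / h <= INR L.
    have -> : INR L = 2 * K / h by rewrite /h; field; lra.
    apply: Rmult_le_compat_r; last lra.
    by apply: Rlt_le; apply: Rinv_0_lt_compat.
  have [c [hc [s1 s2]]] := interval_pick L1 (conj hs0 hs1).
  exists c => l; rewrite /a /b hc.
  have e1 : (x i + K) / h * h = x i + K by field; lra.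
  have t1 : INR c * h <= x i + K by rewrite -e1; apply: Rmult_le_compat_r; lra.
  have t2 : x i + K <= (INR c + 1) * h by rewrite -e1; apply: Rmult_le_compat_r; lra.
  case spl: (sp l).
    move: spl; rewrite /sp => /orP [/eqP ->|/eqP ->]; rewrite -?hij; lra.
  exact: Rabs_bnd (hb l).
move=> N.
apply: (Rle_trans _ (INR L * (h * (h * C ^ n)))).
  apply: sum_bound_L.
  - have : 0 <= h * h by nra. nra.
  - move=> m; apply: box_vol_ge0 => l; rewrite /a /b; case: (m < L)%N; last lra.
    case: (sp l); first nra. lra.
  - move=> m hm; rewrite /a /b; have -> : (m < L)%N = false by lia.
    exact: box0 i.
  - move=> m; rewrite /box_vol (bigD1 i) // (bigD1 j) /=; last by rewrite eq_sym.
    have fr : forall l, 0 <= b m l - a m l <= C.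
      move=> l; rewrite /a /b; case: (m < L)%N; last lra.
      case: (sp l); lra.
    have [p1 p2] := @prod_le_pow _ (index_enum 'I_n) (fun l => (l != i) && (l != j)) _ C hC1 fr.
    rewrite size_index_enum_ord in p2.
    move: p1 p2; set Q := \big[Rmult/1]_(l <- _ | _) _ => p1 p2.
    rewrite /a /b; case: (m < L)%N.
      rewrite /sp eqxx /= eqxx orbT.
      have -> : -K + (INR m + 1) * h - (-K + INR m * h) = h by ring.
      have : 0 <= h * h by nra.
      nra.
    rewrite Rminus_0_r Rmult_0_l; have : 0 <= h * (h * C ^ n) by nra. lra.
rewrite /h.
have -> : INR L * (2 * K / INR L * (2 * K / INR L * C ^ n)) = 4 * K * K * C ^ n / INR L by field; lra.
apply: (Rmult_le_reg_r (INR L)) => //.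
rewrite /Rdiv Rmult_assoc Rinv_l; last lra.
have : 4 * K * K * C ^ n / eps < INR L by lra.
move=> hlt; have := Rmult_lt_compat_r eps _ _ he hlt.
rewrite /Rdiv Rmult_assoc Rinv_l; lra.
Qed.
End Piece.

Lemma null_union_fin n (i0 : 'I_n) (P : 'I_n -> state n -> Prop) :
  (forall i, lebesgue_null (P i)) -> lebesgue_null (fun x => exists i, P i x).
Proof.
move=> hP.
apply: (@null_mono _ _ (fun x => exists k : nat, exists i : 'I_n, nat_of_ord i = k /\ P i x)).
  move=> x [i Pi]; exists (nat_of_ord i), i; by split.
apply: null_union => k.
case: (ltnP k n) => hk.
  apply: (@null_mono _ _ (P (Ordinal hk))) (hP _) => x [i [ik Pi]].
  by have -> : Ordinal hk = i by apply: val_inj; rewrite /= ik.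
apply: (@null_mono _ _ (fun _ => False)) (null_empty i0) => x [i [ik _]].
by move: (ltn_ord i); rewrite ik; lia.
Qed.

Lemma null_diag n (i0 : 'I_n) :
  lebesgue_null (fun x : state n => exists i j, i != j /\ x i = x j).
Proof.
apply: (@null_mono _ _ (fun x => exists K : nat, exists i, exists j,
   (i != j /\ x i = x j /\ forall l, Rabs (x l) <= INR K + 1))).
  move=> x [i [j [ij e]]].
  have [m [_ hm]] := exists_argmax (fun l => Rabs (x l)) (in_setT i0).
  have [K hK] := INR_unbounded (Rabs (x m)).
  exists K, i, j; split=>//; split=>// l; have := hm l (in_setT l); simpl; lra.
apply: null_union => K; apply: (null_union_fin i0) => i; apply: (null_union_fin i0) => j.
case: (eqVneq i j) => [<-|ij].
  apply: (@null_mono _ _ (fun _ => False)) (null_empty i0) => x [h _].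
  by [].
apply: (@null_mono _ _ (fun x : state n => x i = x j /\ forall l, Rabs (x l) <= INR K + 1)).
  by move=> x [_ h].
apply: null_piece => //; have := pos_INR K; lra.
Qed.

Definition inrng n (x : state n) lo hi := forall j, lo <= x j <= hi.

Lemma Rdist_bnd a b lo hi : lo <= a <= hi -> lo <= b <= hi -> Rdist a b <= hi - lo.
Proof. rewrite /Rdist /Rabs; case: Rcase_abs => *; lra. Qed.

Lemma conv_generic n (i0 : 'I_n) (X : nat -> state n) (p : nat) (q : R) :
  (1 <= p)%N -> 0 <= q < 1 ->
  (forall s lo hi, inrng (X s) lo hi -> forall d, inrng (X (s + d)%N) lo hi) ->
  (forall s lo hi, inrng (X s) lo hi -> exists lo' hi',
      inrng (X (s + p)%N) lo' hi' /\ hi' - lo' <= q * (hi - lo)) ->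
  (exists lo hi, inrng (X 0%N) lo hi) ->
  asymptotic_consensus X.
Proof.
move=> hp hq hR hC [lo0 [hi0 h0]].
have hD : 0 <= hi0 - lo0 by have := h0 i0; lra.
have it : forall r, exists lo hi, inrng (X (r * p)%N) lo hi /\ hi - lo <= q ^ r * (hi0 - lo0).
  elim=> [|r [lo [hi [h1 h2]]]]; first by exists lo0, hi0; split=>//=; lra.
  have [lo' [hi' [h3 h4]]] := hC _ _ _ h1.
  exists lo', hi'; split; first by rewrite mulSn addnC.
  rewrite /=; have := Rmult_le_compat_l q _ _ (proj1 hq) h2; lra.
have small : forall eps, 0 < eps -> exists N, forall m m' i i', (N <= m)%N -> (N <= m')%N ->
    Rdist (X m i) (X m' i') < eps.
  move=> eps he.
  have [r hr] := pow_lt_1_zero q ltac:(rewrite Rabs_pos_eq; lra) (eps / (hi0 - lo0 + 1))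
    ltac:(apply: Rdiv_lt_0_compat; lra).
  have {hr} hr := hr r (Nat.le_refl r); rewrite Rabs_pos_eq in hr; last by apply: pow_le; lra.
  have [lo [hi [h1 h2]]] := it r.
  exists (r * p)%N => m m' i i' hm hm'.
  have := hR _ _ _ h1 (m - r * p)%N i; rewrite subnKC //.
  have := hR _ _ _ h1 (m' - r * p)%N i'; rewrite subnKC // => b1 b2.
  apply: (Rle_lt_trans _ _ _ (Rdist_bnd b2 b1)); apply: (Rle_lt_trans _ _ _ h2).
  have hq0 : 0 <= q ^ r by apply: pow_le; lra.
  have : q ^ r * (hi0 - lo0 + 1) < eps.
    have e : eps = eps / (hi0 - lo0 + 1) * (hi0 - lo0 + 1) by field; lra.
    rewrite [X in _ < X]e; apply: Rmult_lt_compat_r => //; lra.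
  nra.
have cau : Cauchy_crit (fun m => X m i0).
  move=> eps he; have [N hN] := small eps he; exists N => m m' hm hm'.
  by apply: hN; apply/leP.
have [z hz] := R_complete _ cau.
exists z => i eps he.
have [N1 hN1] := hz (eps / 2) ltac:(lra).
have [N2 hN2] := small (eps / 2) ltac:(lra).
exists (maxn N1 N2) => m hm.
have hm1 : (m >= N1)%coq_nat by apply/leP; move/leP: hm; lia.
have hm2 : (N2 <= m)%N by move/leP: hm; lia.
have := hN1 m hm1; have := hN2 m m i i0 hm2 hm2; have := Rdist_tri (X m i) z (X m i0).
rewrite (Rdist_sym (X m i0) z) => *; lra.
Qed.

Section StepC.
Variables (n mu : nat) (sel : policy n) (hsel : policy_ok mu sel) (hmu : (1 <= mu)%N).
Variables (alpha : nat -> R) (k : nat) (y : state n).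

Lemma step_rng lo hi : 0 <= alpha k <= 1 -> inrng y lo hi -> inrng (step alpha sel k y) lo hi.
Proof.
move=> ha h i; rewrite step_eq.
have h1 : lo <= mN sel k y i by apply: minN_ge => [|j _]; [have := h i| have := h j]; lra.
have h2 : MN sel k y i <= hi by apply: maxN_le => [|j _]; [have := h i| have := h j]; lra.
have := mN_self sel k y i; have := MN_self sel k y i; nra.
Qed.

Lemma step_upA a hi i : 0 < a <= alpha k -> alpha k < 1 -> inrng y (y i) hi \/ True ->
  (forall j, y j <= hi) -> step alpha sel k y i <= a * mN sel k y i + (1 - a) * hi.
Proof.
move=> ha ha1 _ h; rewrite step_eq.
have h2 : MN sel k y i <= hi by apply: maxN_le => [|j _]; [have := h i| have := h j]; lra.
have := mN_self sel k y i; have := MN_self sel k y i; nra.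
Qed.

Lemma step_loB b lo i : 0 < alpha k -> alpha k <= b < 1 ->
  (forall j, lo <= y j) -> b * lo + (1 - b) * MN sel k y i <= step alpha sel k y i.
Proof.
move=> ha hb h; rewrite step_eq.
have h1 : lo <= mN sel k y i by apply: minN_ge => [|j _]; [have := h i| have := h j]; lra.
have := mN_self sel k y i; have := MN_self sel k y i; nra.
Qed.

Lemma newA thr : (exists s0, y s0 <= thr) -> (exists o, thr < y o) ->
  exists j, thr < y j /\ mN sel k y j <= thr.
Proof.
move=> [s0 hs0] [o ho].
have oO : o \in [set j | ~~ leRb (y j) thr] by rewrite inE; apply/negP => /leRbP; lra.
have [j [jO hj]] := exists_argmin y oO.
move: jO; rewrite inE => /negP jO; have yj : thr < y j by apply: Rnot_le_lt => h; apply: jO; apply/leRbP.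
exists j; split=>//.
have hb : (0 < #|below y j|)%N by apply/card_gt0P; exists s0; rewrite inE; apply/ltRbP; lra.
have : (0 < #|Lw sel k y j|)%N by rewrite (Lw_card hsel); lia.
move/card_gt0P => [u uL].
have hu := Lw_lt hsel uL.
have : y u <= thr.
  apply: Rnot_lt_le => hu2.
  have : u \in [set j | ~~ leRb (y j) thr] by rewrite inE; apply/negP => /leRbP; lra.
  move/hj; lra.
have : mN sel k y j <= y u by apply: mN_le; rewrite in_nbhd uL orbT.
lra.
Qed.

Lemma newB thr : (exists s0, thr <= y s0) -> (exists o, y o < thr) ->
  exists j, y j < thr /\ thr <= MN sel k y j.
Proof.
move=> [s0 hs0] [o ho].
have oO : o \in [set j | ~~ leRb thr (y j)] by rewrite inE; apply/negP => /leRbP; lra.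
have [j [jO hj]] := exists_argmax y oO.
move: jO; rewrite inE => /negP jO; have yj : y j < thr by apply: Rnot_le_lt => h; apply: jO; apply/leRbP.
exists j; split=>//.
have hb : (0 < #|above y j|)%N by apply/card_gt0P; exists s0; rewrite inE; apply/ltRbP; lra.
have : (0 < #|Up sel k y j|)%N by rewrite (Up_card hsel); lia.
move/card_gt0P => [u uU].
have hu := Up_gt hsel uU.
have : thr <= y u.
  apply: Rnot_lt_le => hu2.
  have : u \in [set j | ~~ leRb thr (y j)] by rewrite inE; apply/negP => /leRbP; lra.
  move/hj; lra.
have : y u <= MN sel k y j by apply: MN_ge; rewrite in_nbhd uU !orbT.
lra.
Qed.
End StepC.

Lemma card_all n (S : {set 'I_n}) : (n <= #|S|)%N -> forall i, i \in S.
Proof.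
move=> h i; have /eqP -> : S == setT by rewrite eqEcard subsetT cardsT card_ord.
by rewrite inE.
Qed.

Lemma card_notall n (S : {set 'I_n}) : (#|S| < n)%N -> exists o, o \notin S.
Proof.
move=> h; apply: NNPP => hn.
have : (n <= #|S|)%N.
  rewrite -[X in (X <= _)%N]card_ord -cardsT; apply: subset_leq_card; apply/subsetP => o _.
  by apply/negPn/negP => oS; apply: hn; exists o.
lia.
Qed.

Section Traj.
Variables (n mu : nat) (sel : policy n) (hsel : policy_ok mu sel) (hmu : (1 <= mu)%N).
Variables (alpha : nat -> R) (halpha : alpha_ok alpha) (k0 : nat) (x0 : state n).
Variable (hn : (2 <= n)%N).

Let X := traj alpha sel k0 x0.

Lemma XS m : X m.+1 = step alpha sel (k0 + m) (X m). Proof. by []. Qed.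

Lemma X_rng s lo hi : inrng (X s) lo hi -> forall d, inrng (X (s + d)%N) lo hi.
Proof.
move=> h; elim=> [|d IH]; first by rewrite addn0.
rewrite addnS XS; apply: step_rng => //; have := halpha (k0 + (s + d))%N; lra.
Qed.

Let i0 : 'I_n := Ordinal (ltnW hn).

Lemma contrA a : 0 < a -> (forall k, a <= alpha k) -> forall s lo hi, inrng (X s) lo hi ->
  exists lo' hi', inrng (X (s + n.-1)%N) lo' hi' /\ hi' - lo' <= (1 - a ^ n.-1) * (hi - lo).
Proof.
move=> ha hA s lo hi h.
have a1 : a < 1 by have := hA 0%N; have := halpha 0%N; lra.
have [am [_ ham]] := exists_argmin (X s) (in_setT i0).
set m0 := X s am. have Em0 : X s am = m0 by []. clearbody m0. rewrite Em0 in ham.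
have claim : forall t, inrng (X (s + t)%N) m0 hi /\
   (minn n t.+1 <= #|[set i | leRb (X (s + t)%N i) (hi - a ^ t * (hi - m0))]|)%N.
  elim=> [|t [IH1 IH2]].
    rewrite addn0; split.
      move=> j; have := h j; have := ham j (in_setT j); lra.
    apply: (@leq_trans 1); first by rewrite geq_minr.
    apply/card_gt0P; exists am; rewrite inE Em0; apply/leRbP; rewrite /=; lra.
  rewrite addnS XS; set y := X (s + t)%N in IH1 IH2 *.
  set thr := hi - a ^ t * (hi - m0) in IH2.
  set S := [set i | leRb (y i) thr] in IH2.
  have e : hi - a ^ t.+1 * (hi - m0) = a * thr + (1 - a) * hi by rewrite /thr /=; ring.
  rewrite e.
  have ak : 0 < a <= alpha (k0 + (s + t))%N by have := hA (k0 + (s + t))%N; lra.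
  have ak1 : alpha (k0 + (s + t))%N < 1 by have := halpha (k0 + (s + t))%N; lra.
  have yhi : forall j, y j <= hi by move=> j; have := IH1 j; lra.
  split.
    apply: step_rng => //; have := halpha (k0 + (s + t))%N; lra.
  set S' := [set i | _].
  have sub : S \subset S'.
    apply/subsetP => i; rewrite !inE => /leRbP hi'; apply/leRbP.
    have := step_upA sel (i:=i) ak ak1 (or_intror I) yhi.
    have := mN_self sel (k0 + (s + t))%N y i; nra.
  case: (ltnP #|S| n) => hS.
    have [o oS] := card_notall hS.
    have [s0 s0S] : exists s0, s0 \in S by apply/card_gt0P; lia.
    have E1 : exists s0, y s0 <= thr by exists s0; move: s0S; rewrite inE => /leRbP.
    have E2 : exists o, thr < y o.
      by exists o; apply: Rnot_le_lt => ho; move: oS; rewrite inE; move/negP; apply; apply/leRbP.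
    have [j [hj1 hj2]] := newA hsel hmu (k0 + (s + t))%N E1 E2.
    have jS : j \notin S by rewrite inE; apply/negP => /leRbP; lra.
    have sub2 : j |: S \subset S'.
      apply/subsetP => i; rewrite !inE => /orP [/eqP ->|iS].
        apply/leRbP; have := step_upA sel (i:=j) ak ak1 (or_intror I) yhi; nra.
      by move/subsetP: sub => /(_ i); rewrite !inE; apply.
    have := subset_leq_card sub2; rewrite cardsU1 jS add1n; lia.
  have := subset_leq_card sub; lia.
have [c1 c2] := claim n.-1.
exists m0, (hi - a ^ n.-1 * (hi - m0)); split.
  move=> j; split; first by have := c1 j; lra.
  have := card_all (leq_trans _ c2) j; rewrite inE prednK; last lia.
  by rewrite minnn; move=> /(_ (leqnn n)) /leRbP.
have : a ^ n.-1 <= 1 by rewrite -(pow1 n.-1); apply: pow_incr; lra.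
have : lo <= m0 by have := h am; rewrite Em0; lra.
have : 0 <= a ^ n.-1 by apply: pow_le; lra.
nra.
Qed.

Lemma contrB b : b < 1 -> (forall k, alpha k <= b) -> forall s lo hi, inrng (X s) lo hi ->
  exists lo' hi', inrng (X (s + n.-1)%N) lo' hi' /\ hi' - lo' <= (1 - (1 - b) ^ n.-1) * (hi - lo).
Proof.
move=> hb hB s lo hi h.
have b0 : 0 < b by have := hB 0%N; have := halpha 0%N; lra.
set a := 1 - b.
have ha : 0 < a by rewrite /a; lra.
have [am [_ ham]] := exists_argmax (X s) (in_setT i0).
set M0 := X s am. have Em0 : X s am = M0 by []. clearbody M0. rewrite Em0 in ham.
have claim : forall t, inrng (X (s + t)%N) lo M0 /\
   (minn n t.+1 <= #|[set i | leRb (lo + a ^ t * (M0 - lo)) (X (s + t)%N i)]|)%N.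
  elim=> [|t [IH1 IH2]].
    rewrite addn0; split.
      move=> j; have := h j; have := ham j (in_setT j); lra.
    apply: (@leq_trans 1); first by rewrite geq_minr.
    apply/card_gt0P; exists am; rewrite inE Em0; apply/leRbP; rewrite /=; lra.
  rewrite addnS XS; set y := X (s + t)%N in IH1 IH2 *.
  set thr := lo + a ^ t * (M0 - lo) in IH2.
  set S := [set i | leRb thr (y i)] in IH2.
  have e : lo + a ^ t.+1 * (M0 - lo) = b * lo + (1 - b) * thr by rewrite /thr /a /=; ring.
  rewrite e.
  have ak : 0 < alpha (k0 + (s + t))%N by have := halpha (k0 + (s + t))%N; lra.
  have ak1 : alpha (k0 + (s + t))%N <= b < 1 by have := hB (k0 + (s + t))%N; lra.
  have ylo : forall j, lo <= y j by move=> j; have := IH1 j; lra.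
  split.
    apply: step_rng => //; have := halpha (k0 + (s + t))%N; lra.
  set S' := [set i | _].
  have sub : S \subset S'.
    apply/subsetP => i; rewrite !inE => /leRbP hi'; apply/leRbP.
    have := step_loB sel i ak ak1 ylo.
    have := MN_self sel (k0 + (s + t))%N y i; nra.
  case: (ltnP #|S| n) => hS.
    have [o oS] := card_notall hS.
    have [s0 s0S] : exists s0, s0 \in S by apply/card_gt0P; lia.
    have E1 : exists s0, thr <= y s0 by exists s0; move: s0S; rewrite inE => /leRbP.
    have E2 : exists o, y o < thr.
      by exists o; apply: Rnot_le_lt => ho; move: oS; rewrite inE; move/negP; apply; apply/leRbP.
    have [j [hj1 hj2]] := newB hsel hmu (k0 + (s + t))%N E1 E2.
    have jS : j \notin S by rewrite inE; apply/negP => /leRbP; lra.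
    have sub2 : j |: S \subset S'.
      apply/subsetP => i; rewrite !inE => /orP [/eqP ->|iS].
        apply/leRbP; have := step_loB sel j ak ak1 ylo; nra.
      by move/subsetP: sub => /(_ i); rewrite !inE; apply.
    have := subset_leq_card sub2; rewrite cardsU1 jS add1n; lia.
  have := subset_leq_card sub; lia.
have [c1 c2] := claim n.-1.
exists (lo + a ^ n.-1 * (M0 - lo)), M0; split.
  move=> j; split; last by have := c1 j; lra.
  have := card_all (leq_trans _ c2) j; rewrite inE prednK; last lia.
  by rewrite minnn; move=> /(_ (leqnn n)) /leRbP.
have : a ^ n.-1 <= 1 by rewrite -(pow1 n.-1); apply: pow_incr; rewrite /a; lra.
have : M0 <= hi by have := h am; rewrite Em0; lra.
have : 0 <= a ^ n.-1 by apply: pow_le; lra.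
nra.
Qed.
End Traj.

Section P1.
Variables (n mu : nat) (sel : policy n) (hsel : policy_ok mu sel) (k : nat) (x : state n).
Variable (hn : (n <= mu.+1)%N).

Let cb (i : 'I_n) : forall (S : {set 'I_n}), i \notin S -> (#|S| <= mu)%N.
Proof.
  move=> S iS; have : S \subset [set: 'I_n] :\ i.
    apply/subsetP => o oS; rewrite !inE andbT; apply/negP => /eqP e; rewrite e in oS; by rewrite oS in iS.
  move/subset_leq_card; have := cardsD1 i [set: 'I_n]; rewrite in_setT add1n cardsT card_ord; move: hn; set c := #|_ :\ i|; set d := #|S|; lia.
Qed.

Lemma mN_glob i j : mN sel k x i <= x j /\ x j <= MN sel k x i.
Proof.
have h1 := mN_self sel k x i; have h2 := MN_self sel k x i.
case: (Rtotal_order (x j) (x i)) => [h|[h|h]].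
- have jN : j \in nbhd i (sel k x i).
    rewrite in_nbhd; apply/or3P; apply: Or32; apply: (Lw_full hsel) => //; apply: (@cb i (below x i)).
    by rewrite /below /above inE; apply/negP => /ltRbP; lra.
  split; [exact: mN_le|lra].
- lra.
- have jN : j \in nbhd i (sel k x i).
    rewrite in_nbhd; apply/or3P; apply: Or33; apply: (Up_full hsel) => //; apply: (@cb i (above x i)).
    by rewrite /below /above inE; apply/negP => /ltRbP; lra.
  split; [lra|exact: MN_ge].
Qed.

Lemma step_const alpha i i' : step alpha sel k x i = step alpha sel k x i'.
Proof.
rewrite !step_eq.
have e1 : mN sel k x i = mN sel k x i'.
  have a1 : forall p q, mN sel k x p <= mN sel k x q.
    move=> p q; case: (minN_att x q (nbhd q (sel k x q))) => [e|[j [_ e]]];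
    rewrite -/(mN sel k x q) in e; rewrite e;
    [by case: (mN_glob p q) | by case: (mN_glob p j)].
  by apply: Rle_antisym.
have e2 : MN sel k x i = MN sel k x i'.
  have a1 : forall p q, MN sel k x q <= MN sel k x p.
    move=> p q; case: (maxN_att x q (nbhd q (sel k x q))) => [e|[j [_ e]]];
    rewrite -/(MN sel k x q) in e; rewrite e;
    [by case: (mN_glob p q) | by case: (mN_glob p j)].
  by apply: Rle_antisym.
by rewrite e1 e2.
Qed.
End P1.

Lemma part1 n mu (hn3 : (3 <= n)%N) (hn : (n <= mu.+1)%N) (alpha : nat -> R) (sel : policy n) :
  alpha_ok alpha -> policy_ok mu sel -> forall k0 (x0 : state n),
  finite_time_consensus (traj alpha sel k0 x0).
Proof.
move=> ha hsel k0 x0.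
have i0 : 'I_n by exists 0%N; lia.
exists (traj alpha sel k0 x0 1 i0), 1%N => i.
by rewrite /= (step_const hsel _ x0 hn alpha i i0).
Qed.

Lemma part2 n mu (hn : (mu.+1 < n)%N) (hmu : (1 <= mu)%N) (alpha : nat -> R) (sel : policy n) :
  alpha_ok alpha -> policy_ok mu sel -> forall k0,
  lebesgue_null (fun x0 : state n => finite_time_consensus (traj alpha sel k0 x0)).
Proof.
move=> ha hsel k0.
have i0 : 'I_n by exists 0%N; lia.
apply: (null_mono _ (null_diag i0)) => x0 hc.
apply: NNPP => hnd.
have hinj : forall i j, x0 i = x0 j -> i = j.
  move=> i j e; case: (eqVneq i j) => // ij; exfalso; apply: hnd; by exists i, j.
have [a [_ ham]] := exists_argmin x0 (in_setT i0).
have [b hb] := @rank_exists _ x0 hinj mu.+1 ltac:(apply/andP; split; [by []|lia]).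
have J0 : Jinv mu x0 a b.
  split=>//; move=> j ja; have := ham j (in_setT j) => h.
  case: (Rle_lt_or_eq_dec _ _ h) => // e; by move: ja; rewrite (hinj _ _ e) eqxx.
have JT : forall m, Jinv mu (traj alpha sel k0 x0 m) a b.
  elim=> [|m IH] //=; apply: (Jinv_step hsel) => //; exact: ha.
have [j ja] : exists j, j != a.
  have : (0 < #|[set: 'I_n] :\ a|)%N.
    have := cardsD1 a [set: 'I_n]; rewrite in_setT add1n cardsT card_ord; lia.
  move/card_gt0P => [j]; rewrite !inE andbT => ja; by exists j.
case: hc => z [T hT]; case: (JT T) => h _; have := h j ja; rewrite !hT; lra.
Qed.

Lemma part3 n mu (hn : (mu.+1 < n)%N) (hmu : (1 <= mu)%N) (alpha : nat -> R) (sel : policy n) :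
  alpha_ok alpha -> policy_ok mu sel -> monotone_seq alpha ->
  forall k0 (x0 : state n), asymptotic_consensus (traj alpha sel k0 x0).
Proof.
move=> ha hsel hm k0 x0.
have hn2 : (2 <= n)%N by lia.
have i0 : 'I_n by exists 0%N; lia.
have init : exists lo hi, inrng (traj alpha sel k0 x0 0) lo hi.
  have [am [_ ham]] := exists_argmin x0 (in_setT i0).
  have [aM [_ haM]] := exists_argmax x0 (in_setT i0).
  exists (x0 am), (x0 aM) => j /=; split; [exact: ham (in_setT j) | exact: haM (in_setT j)].
have hR := X_rng (sel:=sel) ha (k0:=k0) (x0:=x0).
have hp : (1 <= n.-1)%N by lia.
case: hm => hmono.
  have hA : forall k, alpha 0%N <= alpha k.
    elim=> [|k IH]; [lra|have := hmono k; lra].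
  have a0 := ha 0%N.
  have q0 : 0 < alpha 0%N ^ n.-1 <= 1.
    split; first by apply: pow_lt; lra.
    by rewrite -(pow1 n.-1); apply: pow_incr; lra.
  have hq : 0 <= 1 - alpha 0%N ^ n.-1 < 1 by lra.
  exact: (conv_generic i0 hp hq hR (contrA hsel hmu ha (k0:=k0) (x0:=x0) hn2 (proj1 a0) hA) init).
have hB : forall k, alpha k <= alpha 0%N.
  elim=> [|k IH]; [lra|have := hmono k; lra].
have a0 := ha 0%N.
have q0 : 0 < (1 - alpha 0%N) ^ n.-1 <= 1.
  split; first by apply: pow_lt; lra.
  have := pow_incr (1 - alpha 0%N) 1 n.-1; rewrite pow1; apply; lra.
have hq : 0 <= 1 - (1 - alpha 0%N) ^ n.-1 < 1 by lra.
exact: (conv_generic i0 hp hq hR (contrB hsel hmu ha (k0:=k0) (x0:=x0) hn2 (proj2 a0) hB) init).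
Qed.

Theorem theorem8 (n mu : nat) (hn : (3 <= n)%N) (hmu : (1 <= mu)%N) :
  ((n <= mu.+1)%N ->
     forall (alpha : nat -> R) (sel : policy n),
       alpha_ok alpha -> policy_ok mu sel ->
       forall (k0 : nat) (x0 : state n),
         finite_time_consensus (traj alpha sel k0 x0))
  /\
  ((mu.+1 < n)%N ->
     forall (alpha : nat -> R) (sel : policy n),
       alpha_ok alpha -> policy_ok mu sel ->
       forall k0 : nat,
         lebesgue_null (fun x0 : state n => finite_time_consensus (traj alpha sel k0 x0)))
  /\
  ((mu.+1 < n)%N ->
     forall (alpha : nat -> R) (sel : policy n),
       alpha_ok alpha -> policy_ok mu sel -> monotone_seq alpha ->
       forall (k0 : nat) (x0 : state n),
         asymptotic_consensus (traj alpha sel k0 x0)).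
Proof.
split; first by move=> h; exact: part1.
split; first by move=> h; exact: part2.
by move=> h; exact: part3.
Qed.
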